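(* Let $k<n$ be positive integers. If there exists an antipodal $k$-splitting of $Q_2^n$, then there exists an antipodal $k$-splitting of $Q_2^{n+1}$.
   Context: $Q_2^n=\{0,1\}^n$. For $0\le m\le n$, an $m$-face of $Q_2^n$ is given by a tuple $a=(a_1,\dots,a_n)\in\{0,1,*\}^n$ with exactly $m$ entries equal to $*$; it denotes the set $\{x\in Q_2^n : x_i=a_i \text{ whenever } a_i\in\{0,1\}\}$. The direction of a face is the set of positions of its asterisks; two faces are parallel if they have the same direction, and two parallel faces $a,b$ are antipodal if $b_i=1-a_i$ at every non-asterisk position $i$. An antipodal $k$-splitting of $Q_2^n$ is a collection of exactly $2^k$ $(n-k)$-faces whose union is $Q_2^n$ and which contains no pair of parallel non-antipodal faces. *)

(* Defs.v *)
From mathcomp Require Import all_boot.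
Set Implicit Arguments. Unset Strict Implicit. Unset Printing Implicit Defensive.

(* A face of Q_2^n: a tuple in {0,1,*}^n, encoded as a finite function
   'I_n -> option bool, where None stands for the asterisk *. *)
Definition face (n : nat) := {ffun 'I_n -> option bool}.
Definition vertex (n : nat) := {ffun 'I_n -> bool}.

Definition direction n (a : face n) : {set 'I_n} := [set i | a i == None].

Definition face_dim n (a : face n) : nat := #|direction a|.

Definition in_face n (x : vertex n) (a : face n) : bool :=
  [forall i, if a i is Some b then x i == b else true].

Definition parallel n (a b : face n) : bool := direction a == direction b.

Definition antipodal n (a b : face n) : bool :=
  parallel a b &&
  [forall i, if a i is Some c then b i == Some (~~ c) else true].

Definition antipodal_splitting (n k : nat) (S : {set face n}) : Prop :=
  [/\ #|S| = 2 ^ k,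
      (forall a, a \in S -> face_dim a = n - k),
      (forall x : vertex n, exists2 a, a \in S & in_face x a) &
      (forall a b, a \in S -> b \in S -> a != b -> parallel a b -> antipodal a b)].
Arguments antipodal_splitting : clear implicits.

(* Main.v *)
Require Import Defs.
From mathcomp Require Import all_boot.
Set Implicit Arguments. Unset Strict Implicit.

Definition ext n (a : face n) : face n.+1 :=
  [ffun i => if unlift ord_max i is Some j then a j else None].

Lemma ext_lift n (a : face n) (j : 'I_n) : @ext n a (lift ord_max j) = a j.
Proof. by rewrite /ext ffunE liftK. Qed.

Lemma ext_max n (a : face n) : @ext n a ord_max = None.
Proof. by rewrite /ext ffunE unlift_none. Qed.

Lemma ext_inj n : injective (@ext n).
Proof. by move=> a b E; apply/ffunP => j; rewrite -!(ext_lift _ j) E. Qed.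

Lemma dir_ext n (a : face n) :
  direction (ext a) = ord_max |: (lift ord_max @: direction a).
Proof.
apply/setP => i; rewrite !inE.
case: (unliftP ord_max i) => [j ->|->]; last by rewrite ext_max eqxx.
rewrite ext_lift mem_imset ?inE; last exact: lift_inj.
by rewrite [lift _ _ == _]eq_sym (negbTE (neq_lift _ _)).
Qed.

Lemma dim_ext n (a : face n) : face_dim (ext a) = (face_dim a).+1.
Proof.
rewrite /face_dim dir_ext cardsU1 card_imset; last exact: lift_inj.
rewrite (_ : ord_max \in _ = false) //.
apply/imsetP => -[j _ E]; by move: (neq_lift ord_max j); rewrite -E eqxx.
Qed.

Lemma mem_dir_lift n (a : face n) (j : 'I_n) :
  (lift ord_max j \in direction (ext a)) = (j \in direction a).
Proof. by rewrite !inE ext_lift. Qed.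

Theorem proposition1 (n k : nat) :
  0 < k -> k < n ->
  (exists S : {set face n}, antipodal_splitting n k S) ->
  exists S : {set face n.+1}, antipodal_splitting n.+1 k S.
Proof.
move=> k0 kn [S [cS dS cov ap]].
exists (@ext n @: S); split.
- by rewrite card_imset //; exact: ext_inj.
- move=> _ /imsetP[a aS ->]; rewrite dim_ext dS // subSn //; exact: ltnW.
- move=> x; have [a aS xa] := cov [ffun j => x (lift ord_max j)].
  exists (ext a); first exact: imset_f.
  apply/forallP => i; case: (unliftP ord_max i) => [j ->|->]; last by rewrite ext_max.
  rewrite ext_lift; move/forallP: xa => /(_ j); rewrite ffunE.
  by case: (a j).
- move=> _ _ /imsetP[a aS ->] /imsetP[b bS ->] nab pab.
  have nab' : a != b by apply: contraNneq nab => ->.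
  have pab' : parallel a b.
    apply/eqP/setP => j; rewrite -(mem_dir_lift a) -(mem_dir_lift b).
    by move/eqP: pab => ->.
  have /andP[_ /forallP H] := ap a b aS bS nab' pab'.
  apply/andP; split => //; apply/forallP => i.
  case: (unliftP ord_max i) => [j ->|->]; last by rewrite ext_max.
  by rewrite !ext_lift; apply: H.
Qed.
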